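(* For $B',B\in\mathcal X_{N-2}$ such that $B'\preceq B$ we have $\varphi(B')\le\varphi(B)$.
   Context: Let $N\ge 3$ be an odd integer and $F=\mathbb Z/2\mathbb Z$. For integers $i,j$ let $[i,j]=\{h\in\mathbb Z: i\le h\le j\}$ (empty if $i>j$). Let $S_N=[1,N]$. The set of all subsets of $S_N$ is an $F$-vector space with sum $X+X'=(X\cup X')-(X\cap X')$; let $E_N$ be the subspace of subsets of even cardinality. A $2$-element subset $\{i,j\}\subseteq S_N$ is written $ij$ when either ($i<j$ and $j-i$ odd) or ($i>j$ and $i-j$ even); each $2$-element subset has exactly one such writing. Let $\mathcal P_N$ be the set of all finite sets $B$ of pairwise disjoint $2$-element subsets of $S_N$; for $B\in\mathcal P_N$ let $\langle B\rangle$ be the $F$-subspace of $E_N$ spanned by the elements of $B$, $\mathrm{supp}(B)=\bigcup_{X\in B}X$, $B^0=\{\{i,j\}\in B: i-j\text{ even}\}$, $B^1=\{\{i,j\}\in B: i-j\text{ odd}\}$. A set $X\subseteq S_N$ is $0$-covered (resp. $1$-covered) by $B^1$ if there are $a_1b_1,\dots,a_sb_s\in B^1$ ($s\ge 0$, so $a_r<b_r$) with $X=[a_1,b_1]\sqcup\dots\sqcup[a_s,b_s]$ (resp. $X=[a_1,b_1]\sqcup\dots\sqcup[a_s,b_s]\sqcup\{u\}$ for some $u$), disjoint unions. Let ${}^*\mathcal P_N$ be the set of $B\in\mathcal P_N$ such that: for every $ij\in B^1$ the set $[i+1,j-1]$ is $0$-covered by $B^1$; and there is a sequence $i_*(B)=(i_1,\dots,i_{2s})$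 in $S_N$ with $B^0=\{i_{2s}i_1,i_{2s-1}i_2,\dots,i_{s+1}i_s\}$ (so $s=|B^0|$; the sequence is unique) such that, if $s\ge1$, each of $[i_1+1,i_2-1],\dots,[i_{s-1}+1,i_s-1],[i_{s+1}+1,i_{s+2}-1],\dots,[i_{2s-1}+1,i_{2s}-1]$ is $0$-covered by $B^1$. For $B\in{}^*\mathcal P_N$ with $i_*(B)=(i_1,\dots,i_{2s})$ consider: (I) $s=0$, or $s\ge1$ and $[1,i_1-1]$ and $[i_{2s}+1,N]$ are $0$-covered by $B^1$; (II) $N\notin\mathrm{supp}(B)$ and either $s=0$, or $s$ is odd and either (i) $[1,i_1-1]$ is $1$-covered and $[i_{2s}+1,N-1]$ is $0$-covered by $B^1$, or (ii) $[1,i_1-1]$ is $0$-covered and $[i_{2s}+1,N-1]$ is $1$-covered by $B^1$; (III) (I) holds and, if $s$ is even then $\{i,N\}\in B$ for some even $i$, if $s$ is odd then $\{i,N\}\in B$ for some odd $i$. Let $\mathcal X_{N-1}$, $\mathcal X^+_{N-2}$, $\mathcal X^-_{N-2}$ be the sets of $B\in{}^*\mathcal P_N$ satisfying (I), (II), (III) respectively, and $\mathcal X_{N-2}=\mathcal X^+_{N-2}\sqcup\mathcal X^-_{N-2}$. For $B\in\mathcal X^+_{N-2}$ with $s\ge1$ there is a unique $u_B$: in case (i), $u_B\in[1,i_1-1]$ with $[1,u_B-1]$, $[u_B+1,i_1-1]$ $0$-covered by $B^1$ ($u_B$ odd); in case (ii), $u_B\in[i_{2s}+1,N-1]$ with $[i_{2s}+1,u_B-1]$,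 $[u_B+1,N-1]$ $0$-covered by $B^1$ ($u_B$ even). Put $[[ij]]=[i,j]$ if $i<j$ and $[[ij]]=[i,N]\cup[1,j]$ if $i>j$. For $B\in\mathcal X_{N-1}$ let $\epsilon(B)=\sum_{ij\in B}[[ij]]\in E_N$. For $B\in\mathcal X_{N-2}$ define ${}'\epsilon(B)\in E_N$: ${}'\epsilon(B)=\sum_{ij\in B}[[ij]]$ if $B\in\mathcal X^-_{N-2}$ or if $B\in\mathcal X^+_{N-2}$ with $|B^0|=0$; ${}'\epsilon(B)=\sum_{ij\in B}[[ij]]+[u_B,N]$ if $B\in\mathcal X^+_{N-2}$, $|B^0|$ odd, $u_B$ even; ${}'\epsilon(B)=\sum_{ij\in B}[[ij]]+\{N\}+[1,u_B]$ if $B\in\mathcal X^+_{N-2}$, $|B^0|$ odd, $u_B$ odd. The map $\varphi:\mathcal X_{N-2}\to\mathcal X_{N-1}$ (a bijection) is given by $\varphi(B)=B$ if $B\in\mathcal X^-_{N-2}$ or if $B\in\mathcal X^+_{N-2}$ with $|B^0|=0$, and $\varphi(B)=B\sqcup\{\{u_B,N\}\}$ if $B\in\mathcal X^+_{N-2}$ with $|B^0|>0$. For $B,B'\in\mathcal X_{N-2}$ write $B'\preceq B$ if there is a sequence $B'=B_0,\dots,B_h=B$ ($h\ge0$) in $\mathcal X_{N-2}$ with ${}'\epsilon(B_k)\in\langle B_{k+1}\rangle$ for $k=0,\dots,h-1$. For $B,B'\in\mathcal X_{N-1}$ write $B'\le B$ if there is a sequence $B'=B_0,\dots,B_h=B$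 ($h\ge0$) in $\mathcal X_{N-1}$ with $\epsilon(B_k)\in\langle B_{k+1}\rangle$ for $k=0,\dots,h-1$. *)

(* Defs.v *)
From mathcomp Require Import all_boot.
Set Implicit Arguments. Unset Strict Implicit. Unset Printing Implicit Defensive.

(* Points of S_N = [1,N] are represented in 'I_N.+1 = {0,...,N}; the point 0
   is never used (every relevant subset is contained in S_N = itv N 1 N). *)

Section Defs.
Variable N : nat.
Local Notation pt := 'I_N.+1.
Local Notation subs := {set pt}.
Local Notation fam := {set {set pt}}.

Definition itv (i j : nat) : subs := [set x : pt | (i <= x <= j)%N].

Definition SN : subs := itv 1 N.

(* the F_2-vector-space sum X + X' = (X u X') - (X n X') *)
Definition symd (X Y : subs) : subs := (X :\: Y) :|: (Y :\: X).

Definition sumF (D : fam) : subs := \big[symd/set0]_(Y in D) Y.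

(* X in <B> : X is an F_2-linear combination (= sum of a subfamily) of elements of B *)
Definition inspan (X : subs) (B : fam) : bool :=
  [exists D : fam, (D \subset B) && (X == sumF D)].

Definition is2 (X : subs) : bool := (#|X| == 2) && (X \subset SN).

Definition inP (B : fam) : bool :=
  [forall X in B, is2 X] &&
  [forall X in B, forall Y in B, (X != Y) ==> [disjoint X & Y]].

Definition supp (B : fam) : subs := \bigcup_(X in B) X.

Definition odd_pair (X : subs) : bool :=
  [exists x in X, exists y in X, odd (x + y)].

Definition B1 (B : fam) : fam := [set X in B | odd_pair X].
Definition B0 (B : fam) : fam := [set X in B | ~~ odd_pair X].

Definition hull (X : subs) : subs :=
  [set z : pt | [exists x in X, exists y in X, (x <= z <= y)%N]].

Definition hulls_disjoint (C : fam) : bool :=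
  [forall Y in C, forall Z in C, (Y != Z) ==> [disjoint hull Y & hull Z]].

Definition covered0 (B : fam) (X : subs) : bool :=
  [exists C : fam, [&& C \subset B1 B, hulls_disjoint C &
                       X == \bigcup_(Y in C) hull Y]].

Definition covered1 (B : fam) (X : subs) : bool :=
  [exists u : pt, exists C : fam,
     [&& C \subset B1 B, hulls_disjoint C,
         u \notin \bigcup_(Y in C) hull Y &
         X == u |: \bigcup_(Y in C) hull Y]].

(* i_*(B) = (i_1 < ... < i_{2s}) : the increasing enumeration of supp(B^0);
   i_{k+1} = ist B k (0-indexed). *)
Definition istar (B : fam) : seq nat :=
  sort leq (map (@nat_of_ord _) (enum (supp (B0 B)))).
Definition sB (B : fam) : nat := #|B0 B|.
Definition ist (B : fam) (k : nat) : nat := nth 0 (istar B) k.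
Definition ifirst (B : fam) : nat := ist B 0.
Definition ilast (B : fam) : nat := ist B (2 * sB B).-1.

Definition starP (B : fam) : bool :=
  [&& inP B,
      [forall X in B1 B, covered0 B (hull X :\: X)],
      (* B^0 = { i_{2s} i_1, i_{2s-1} i_2, ..., i_{s+1} i_s } *)
      (size (istar B) == 2 * sB B),
      B0 B == [set X : subs | [exists k : 'I_(sB B),
                 X == [set x : pt | (val x == ist B k) ||
                                    (val x == ist B (2 * sB B - 1 - k))]]] &
      (* [i_k+1, i_{k+1}-1] 0-covered for k = 1..s-1 and k = s+1..2s-1 *)
      [forall k : 'I_(2 * sB B),
         ((k.+1 < 2 * sB B) && (k.+1 != sB B)) ==>
         covered0 B (itv (ist B k).+1 (ist B k.+1).-1)]].

Definition condI (B : fam) : bool :=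
  (sB B == 0) ||
  (covered0 B (itv 1 (ifirst B).-1) && covered0 B (itv (ilast B).+1 N)).

Definition caseI (B : fam) : bool :=
  covered1 B (itv 1 (ifirst B).-1) && covered0 B (itv (ilast B).+1 N.-1).
Definition caseII (B : fam) : bool :=
  covered0 B (itv 1 (ifirst B).-1) && covered1 B (itv (ilast B).+1 N.-1).

Definition Nin (X : subs) : bool := [exists x in X, val x == N].

Definition condII (B : fam) : bool :=
  ~~ Nin (supp B) &&
  ((sB B == 0) || (odd (sB B) && (caseI B || caseII B))).

Definition condIII (B : fam) : bool :=
  condI B &&
  [exists X in B, Nin X && [exists y in X, (val y != N) && (odd y == odd (sB B))]].

Definition XN1 (B : fam) : bool := starP B && condI B.
Definition XN2p (B : fam) : bool := starP B && condII B.
Definition XN2m (B : fam) : bool := starP B && condIII B.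
Definition XN2 (B : fam) : bool := XN2p B || XN2m B.

Definition u_cond (B : fam) (u : pt) : bool :=
  if caseI B then
    [&& 1 <= u <= (ifirst B).-1, covered0 B (itv 1 u.-1) &
        covered0 B (itv u.+1 (ifirst B).-1)]
  else
    [&& (ilast B).+1 <= u <= N.-1, covered0 B (itv (ilast B).+1 u.-1) &
        covered0 B (itv u.+1 N.-1)].

Definition uB (B : fam) : nat :=
  if [pick u | u_cond B u] is Some u then val u else 0.

(* [[ij]] : [i,j] if i < j (odd pair), [i,N] u [1,j] if i > j (even pair) *)
Definition brk (X : subs) : subs :=
  if odd_pair X then hull X else SN :\: (hull X :\: X).

Definition eps (B : fam) : subs := \big[symd/set0]_(X in B) brk X.

Definition eps' (B : fam) : subs :=
  if XN2m B || (sB B == 0) then eps B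
  else if odd (uB B) then symd (eps B) (symd [set x : pt | val x == N] (itv 1 (uB B)))
  else symd (eps B) (itv (uB B) N).

Definition pairset (i j : nat) : subs := [set x : pt | (val x == i) || (val x == j)].

Definition phi (B : fam) : fam :=
  if XN2p B && (0 < sB B) then B :|: [set pairset (uB B) N] else B.

Definition preceq (B' B : fam) : Prop :=
  exists p : seq fam,
    [&& all XN2 (B' :: p), path (fun X Y => inspan (eps' X) Y) B' p & last B' p == B].

Definition leX (B' B : fam) : Prop :=
  exists p : seq fam,
    [&& all XN1 (B' :: p), path (fun X Y => inspan (eps X) Y) B' p & last B' p == B].

End Defs.

(* Main.v *)
From HB Require Import structures.
Require Import Defs.
From mathcomp Require Import all_boot zify.
Set Implicit Arguments. Unset Strict Implicit. Unset Printing Implicit Defensive.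


Lemma in_symd N (X Y : {set 'I_N.+1}) x : (x \in symd X Y) = (x \in X) (+) (x \in Y).
Proof. rewrite /symd !inE; by case: (x \in X); case: (x \in Y). Qed.

Lemma symdA N : associative (@symd N).
Proof. move=> X Y Z; apply/setP=> x; rewrite !in_symd; by case: (x \in X); case: (x \in Y); case: (x \in Z). Qed.
Lemma symdC N : commutative (@symd N).
Proof. move=> X Y; apply/setP=> x; rewrite !in_symd; by case: (x \in X); case: (x \in Y). Qed.
Lemma sym0d N : left_id set0 (@symd N).
Proof. move=> X; apply/setP=> x; rewrite !in_symd inE; by case: (x \in X). Qed.

HB.instance Definition symd_law N := Monoid.isComLaw.Build {set 'I_N.+1} set0 (@symd N) (@symdA N) (@symdC N) (@sym0d N).

Lemma eps_add N (B : {set {set 'I_N.+1}}) P : P \notin B ->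
  eps (B :|: [set P]) = symd (eps B) (brk P).
Proof. move=> nP; rewrite /eps setUC big_setU1 //=; exact: symdC. Qed.


Lemma in_itv N a b (x : 'I_N.+1) : (x \in itv N a b) = (a <= x <= b).
Proof. by rewrite inE. Qed.

Lemma in_hull N (X : {set 'I_N.+1}) x :
  (x \in hull X) = [exists y in X, exists z in X, (y <= x <= z)%N].
Proof. by rewrite inE. Qed.

Lemma sub_hull N (X : {set 'I_N.+1}) : X \subset hull X.
Proof. apply/subsetP=> x xX; rewrite in_hull; apply/existsP; exists x; rewrite xX /=;
  apply/existsP; exists x; by rewrite xX leqnn. Qed.

Lemma itv_empty N a b : b < a -> itv N a b = set0.
Proof. move=> ba; apply/setP=> x; rewrite in_itv inE; lia. Qed.

Lemma B1_mono N (B B2 : {set {set 'I_N.+1}}) : B \subset B2 -> B1 B \subset B1 B2.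
Proof. move=> /subsetP s; apply/subsetP=> X; rewrite !inE => /andP[/s -> ->]; by []. Qed.

Lemma cov0_mono N (B B2 : {set {set 'I_N.+1}}) X :
  B1 B \subset B1 B2 -> covered0 B X -> covered0 B2 X.
Proof.
move=> s /existsP[C /and3P[sC hd eX]]; apply/existsP; exists C.
by rewrite (subset_trans sC s) hd eX.
Qed.

Lemma cov0_set0 N (B : {set {set 'I_N.+1}}) : covered0 B set0.
Proof.
apply/existsP; exists set0; rewrite sub0set big_set0 eqxx andbT.
by apply/forallP=> Y; rewrite inE.
Qed.

Lemma cov0_empty N (B : {set {set 'I_N.+1}}) a b : b < a -> covered0 B (itv N a b).
Proof. by move=> ?; rewrite itv_empty // cov0_set0. Qed.

Lemma card_itv N a b : b <= N -> #|itv N a b| = b.+1 - a.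
Proof.
move=> bN; rewrite -sum1_card.
have -> : \sum_(i in itv N a b) 1 = \sum_(i < N.+1 | a <= i <= b) 1.
  by apply: eq_bigl => i; rewrite in_itv.
rewrite -(big_mkord (fun i => a <= i <= b) (fun _ => 1)).
have : forall n, n <= N.+1 -> \sum_(0 <= i < n | a <= i <= b) 1 = minn n b.+1 - a.
  elim=> [|n IH] nN; first by rewrite big_geq //; lia.
  rewrite big_mkcond big_nat_recr //= -big_mkcond IH; last lia.
  case: ifP => /= H; lia.
move=> ->; lia.
Qed.


Lemma hull2 N (a b : 'I_N.+1) : hull [set a; b] = itv N (minn a b) (maxn a b).
Proof.
apply/setP=> x; rewrite in_hull in_itv; apply/idP/idP.
  move=> /existsP[y /andP[+ /existsP[z /andP[+ +]]]].
  by rewrite !inE => /orP[]/eqP-> /orP[]/eqP->; lia.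
move=> H; case: (leqP a b) => ab.
  apply/existsP; exists a; rewrite set21 /=; apply/existsP; exists b; rewrite set22 /=; lia.
apply/existsP; exists b; rewrite set22 /=; apply/existsP; exists a; rewrite set21 /=; lia.
Qed.

Lemma odd_pair2 N (a b : 'I_N.+1) : odd_pair [set a; b] = odd (a + b).
Proof.
apply/idP/idP.
  move=> /existsP[y /andP[+ /existsP[z /andP[+ +]]]].
  rewrite !inE => /orP[]/eqP-> /orP[]/eqP-> //; rewrite ?addnn ?odd_double // addnC //.
move=> H; apply/existsP; exists a; rewrite set21 /=; apply/existsP; exists b.
by rewrite set22.
Qed.

Lemma is2P N (X : {set 'I_N.+1}) : is2 X -> exists a b : 'I_N.+1,
  [/\ a != b, X = [set a; b], 1 <= a & 1 <= b].
Proof.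
move=> /andP[/cards2P[a [b [ab eX]]] sX]; exists a, b; split=> //.
  by move/subsetP: sX => /(_ a); rewrite eX !inE eqxx => /(_ isT) /andP[].
by move/subsetP: sX => /(_ b); rewrite eX !inE eqxx orbT => /(_ isT) /andP[].
Qed.

Lemma hull_even N (Y : {set 'I_N.+1}) : is2 Y -> odd_pair Y -> ~~ odd #|hull Y|.
Proof.
move=> /is2P[a [b [ab -> _ _]]]; rewrite odd_pair2 hull2 card_itv; last first.
  by have := ltn_ord a; have := ltn_ord b; lia.
rewrite oddB; last lia.
rewrite oddS; case: (leqP a b) => h.
  by rewrite oddD; case: (odd a); case: (odd b).
by rewrite oddD; case: (odd a); case: (odd b).
Qed.

Lemma hd_sub N (C C' : {set {set 'I_N.+1}}) : C' \subset C -> hulls_disjoint C -> hulls_disjoint C'.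
Proof.
move=> /subsetP s /forallP H; apply/forallP=> Y; apply/implyP=> /s YC.
apply/forallP=> Z; apply/implyP=> /s ZC.
by move: (H Y) => /implyP/(_ YC)/forallP/(_ Z)/implyP/(_ ZC).
Qed.

Lemma hd_disj N (C : {set {set 'I_N.+1}}) Y Z x :
  hulls_disjoint C -> Y \in C -> Z \in C -> x \in hull Y -> x \in hull Z -> Y = Z.
Proof.
move=> /forallP H YC ZC xY xZ; apply/eqP; apply: contraT => YZ.
move: (H Y) => /implyP/(_ YC)/forallP/(_ Z)/implyP/(_ ZC)/implyP/(_ YZ).
by move/disjoint_setI0/setP/(_ x); rewrite inE xY xZ inE.
Qed.

Lemma cup_even N (C : {set {set 'I_N.+1}}) : hulls_disjoint C ->
  (forall Y, Y \in C -> ~~ odd #|hull Y|) -> ~~ odd #|\bigcup_(Y in C) hull Y|.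
Proof.
move: {2}#|C| (erefl #|C|) => n; elim: n C => [|n IH] C cC hd He.
  by move: cC => /eqP; rewrite cards_eq0 => /eqP ->; rewrite big_set0 cards0.
have : 0 < #|C| by rewrite cC.
move=> /card_gt0P[Y YC].
rewrite -(setD1K YC) big_setU1 ?setD11 //= cardsU.
have -> : hull Y :&: \bigcup_(Z in C :\ Y) hull Z = set0.
  apply/setP=> x; rewrite in_setI in_set0; apply/negbTE; apply/andP=> [[xY /bigcupP[Z]]].
  rewrite in_setD1 => /andP[ZY ZC] xZ.
  by move: ZY; rewrite (hd_disj hd YC ZC xY xZ) eqxx.
rewrite cards0 subn0 oddD.
have h1 := He Y YC.
have h2 : ~~ odd #|\bigcup_(Z in C :\ Y) hull Z|.
  apply: IH; first by move: cC; rewrite (cardsD1 Y) YC; case.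
    by apply: hd_sub hd; apply: subsetDl.
  by move=> Z; rewrite inE => /andP[_ /He].
by move: h1 h2; case: (odd _); case: (odd _).
Qed.

Lemma inP_is2 N (B : {set {set 'I_N.+1}}) X : inP B -> X \in B -> is2 X.
Proof. by move=> /andP[/forallP H _] XB; move: (H X); rewrite XB. Qed.

Lemma inP_disj N (B : {set {set 'I_N.+1}}) X Y x : inP B -> X \in B -> Y \in B ->
  x \in X -> x \in Y -> X = Y.
Proof.
move=> /andP[_ /forallP H] XB YB xX xY; apply/eqP; apply: contraT => XY.
move: (H X); rewrite XB => /forallP/(_ Y); rewrite YB XY /=.
by move/disjoint_setI0/setP/(_ x); rewrite inE xX xY inE.
Qed.

Lemma cov0_even N (B : {set {set 'I_N.+1}}) X : inP B -> covered0 B X -> ~~ odd #|X|.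
Proof.
move=> iB /existsP[C /and3P[sC hd /eqP ->]]; apply: cup_even => // Y /(subsetP sC).
rewrite inE => /andP[YB op]; apply: hull_even => //; exact: inP_is2 iB YB.
Qed.


Definition B1cond N (B : {set {set 'I_N.+1}}) :=
  [forall X in B1 B, covered0 B (hull X :\: X)].

Lemma cov0_elem N (B : {set {set 'I_N.+1}}) X x : inP B -> B1cond B ->
  covered0 B X -> x \in X -> exists2 Q, Q \in B1 B & (x \in Q) && (hull Q \subset X).
Proof.
move=> iB /forallP HB.
move: {2}#|X| (leqnn #|X|) => n; elim: n X x => [|n IH] X x cX.
  by move: cX; rewrite leqn0 cards_eq0 => /eqP -> _; rewrite inE.
move=> /existsP[C /and3P[sC hd /eqP eX]] xX.
have : x \in \bigcup_(Y in C) hull Y by rewrite -eX.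
move=> /bigcupP[Y YC xY].
have YB1 : Y \in B1 B by apply: (subsetP sC).
have hYX : hull Y \subset X by rewrite eX; apply: (bigcup_sup _ YC).
case xYY: (x \in Y).
  by exists Y => //; rewrite xYY hYX.
have cD : covered0 B (hull Y :\: Y) by move: (HB Y); rewrite YB1.
have YB : Y \in B by move: YB1; rewrite inE => /andP[].
have Y2 : #|Y| = 2 by move: (inP_is2 iB YB) => /andP[/eqP].
have sY := sub_hull Y.
have cardD : #|hull Y :\: Y| <= n.
  rewrite cardsD (setIidPr sY) Y2.
  have := subset_leq_card sY; have := subset_leq_card hYX; lia.
have xD : x \in hull Y :\: Y by rewrite inE xYY xY.
have [Q QB /andP[xQ sQ]] := IH _ x cardD cD xD.
exists Q => //; rewrite xQ /=; apply: (subset_trans sQ); apply: (subset_trans _ hYX).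
exact: subsetDl.
Qed.

Lemma B0B1_neq N (B : {set {set 'I_N.+1}}) R P : R \in B0 B -> P \in B1 B -> R != P.
Proof. rewrite !inE => /andP[_ h1] /andP[_ h2]; apply/eqP=> e; by move: h1; rewrite e h2. Qed.

Lemma B0_sub N (B : {set {set 'I_N.+1}}) R : R \in B0 B -> R \in B.
Proof. by rewrite inE => /andP[]. Qed.
Lemma B1_sub N (B : {set {set 'I_N.+1}}) R : R \in B1 B -> R \in B.
Proof. by rewrite inE => /andP[]. Qed.

Lemma Lz N (B : {set {set 'I_N.+1}}) R P z : inP B -> B1cond B ->
  R \in B0 B -> z \in R -> P \in B1 B -> z \notin hull P.
Proof.
move=> iB HB RB zR PB; apply/negP=> zP.
case zPP : (z \in P).
  by move: (B0B1_neq RB PB); rewrite (inP_disj iB (B0_sub RB) (B1_sub PB) zR zPP) eqxx.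
have cD : covered0 B (hull P :\: P) by move/forallP: HB => /(_ P); rewrite PB.
have zD : z \in hull P :\: P by rewrite inE zPP zP.
have [Q QB /andP[zQ _]] := cov0_elem iB HB cD zD.
by move: (B0B1_neq RB QB); rewrite (inP_disj iB (B0_sub RB) (B1_sub QB) zR zQ) eqxx.
Qed.

Lemma cov1_split N (B : {set {set 'I_N.+1}}) a b : 1 <= a -> covered1 B (itv N a b) ->
  exists u : 'I_N.+1, [/\ a <= u <= b, covered0 B (itv N a u.-1) & covered0 B (itv N u.+1 b)].
Proof.
move=> a1 /existsP[u /existsP[C /and4P[sC hd nu /eqP eX]]].
have Hx : forall x : 'I_N.+1, (a <= x <= b) = (x == u) || (x \in \bigcup_(Y in C) hull Y).
  by move=> x; rewrite -in_itv eX in_setU1.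
have ub : a <= u <= b by rewrite Hx eqxx.
exists u; split=> //.
- apply/existsP; exists [set Y in C | [exists y in Y, y < u]].
  have sub : [set Y in C | [exists y in Y, y < u]] \subset C.
    by apply/subsetP=> Y; rewrite inE => /andP[].
  rewrite (subset_trans sub sC) (hd_sub sub hd) /=.
  apply/eqP/setP=> x; rewrite in_itv; apply/idP/idP.
    move=> xr.
    have xC : x \in \bigcup_(Y in C) hull Y.
      have xu : (x == u) = false by apply/negbTE; apply/eqP => e; move: xr; rewrite e; lia.
      have xab : a <= x <= b by lia.
      by move: (Hx x); rewrite xab xu.
    move: xC => /bigcupP[Y YC xY]; apply/bigcupP; exists Y => //.
    rewrite inE YC /=; move: xY; rewrite in_hull => /existsP[y /andP[yY /existsP[z /andP[_ h]]]].
    apply/existsP; exists y; rewrite yY /=; lia.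
  move=> /bigcupP[Y]; rewrite inE => /andP[YC /existsP[y0 /andP[y0Y y0u]]] xY.
  have xC : x \in \bigcup_(Y in C) hull Y by apply/bigcupP; exists Y.
  have := Hx x; rewrite xC orbT => xab.
  have xu : x != u by apply/eqP => e; move: nu; rewrite -e xC.
  case: (ltnP u x) => ux; last by move: xu; rewrite -val_eqE /=; lia.
  move: xY; rewrite in_hull => /existsP[y1 /andP[_ /existsP[y2 /andP[y2Y h]]]].
  have uY : u \in hull Y.
    rewrite in_hull; apply/existsP; exists y0; rewrite y0Y /=.
    apply/existsP; exists y2; rewrite y2Y /=; lia.
  have uC : u \in \bigcup_(Y in C) hull Y by apply/bigcupP; exists Y.
  by move: nu; rewrite uC.
- apply/existsP; exists [set Y in C | [exists y in Y, u < y]].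
  have sub : [set Y in C | [exists y in Y, u < y]] \subset C.
    by apply/subsetP=> Y; rewrite inE => /andP[].
  rewrite (subset_trans sub sC) (hd_sub sub hd) /=.
  apply/eqP/setP=> x; rewrite in_itv; apply/idP/idP.
    move=> xr.
    have xC : x \in \bigcup_(Y in C) hull Y.
      have xu : (x == u) = false by apply/negbTE; apply/eqP => e; move: xr; rewrite e; lia.
      have xab : a <= x <= b by lia.
      by move: (Hx x); rewrite xab xu.
    move: xC => /bigcupP[Y YC xY]; apply/bigcupP; exists Y => //.
    rewrite inE YC /=; move: xY; rewrite in_hull => /existsP[y /andP[yY /existsP[z /andP[zY h]]]].
    apply/existsP; exists z; rewrite zY /=; lia.
  move=> /bigcupP[Y]; rewrite inE => /andP[YC /existsP[y0 /andP[y0Y y0u]]] xY.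
  have xC : x \in \bigcup_(Y in C) hull Y by apply/bigcupP; exists Y.
  have := Hx x; rewrite xC orbT => xab.
  have xu : x != u by apply/eqP => e; move: nu; rewrite -e xC.
  case: (ltnP x u) => ux; last by move: xu; rewrite -val_eqE /=; lia.
  move: xY; rewrite in_hull => /existsP[y1 /andP[y1Y /existsP[y2 /andP[_ h]]]].
  have uY : u \in hull Y.
    rewrite in_hull; apply/existsP; exists y1; rewrite y1Y /=.
    apply/existsP; exists y0; rewrite y0Y /=; lia.
  have uC : u \in \bigcup_(Y in C) hull Y by apply/bigcupP; exists Y.
  by move: nu; rewrite uC.
Qed.


Lemma mem_istar N (B : {set {set 'I_N.+1}}) n :
  (n \in istar B) = [exists x in supp (B0 B), val x == n].
Proof.
rewrite /istar mem_sort; apply/mapP/existsP.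
  by move=> [x]; rewrite mem_enum => xs ->; exists x; rewrite xs eqxx.
by move=> [x /andP[xs /eqP <-]]; exists x; rewrite ?mem_enum.
Qed.

Lemma sorted_istar N (B : {set {set 'I_N.+1}}) : sorted ltn (istar B).
Proof.
rewrite ltn_sorted_uniq_leq sort_uniq sort_sorted ?andbT; last exact: leq_total.
by rewrite map_inj_uniq ?enum_uniq //; apply: val_inj.
Qed.

Lemma sorted_istar_le N (B : {set {set 'I_N.+1}}) : sorted leq (istar B).
Proof. by move: (sorted_istar B); rewrite ltn_sorted_uniq_leq => /andP[]. Qed.

Lemma ist_le N (B : {set {set 'I_N.+1}}) i j : i <= j -> j < size (istar B) ->
  ist B i <= ist B j.
Proof.
move=> ij js; rewrite /ist; apply: (sorted_leq_nth leq_trans leqnn) => //.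
  exact: sorted_istar_le.
all: rewrite inE; lia.
Qed.

Lemma ist_lt N (B : {set {set 'I_N.+1}}) i j : i < j -> j < size (istar B) ->
  ist B i < ist B j.
Proof.
move=> ij js; rewrite /ist; apply: (sorted_ltn_nth ltn_trans) => //.
  exact: sorted_istar.
all: rewrite inE; lia.
Qed.

Lemma istar_pt N (B : {set {set 'I_N.+1}}) n : n \in istar B ->
  exists R z, [/\ R \in B0 B, z \in R & val z = n].
Proof.
rewrite mem_istar => /existsP[z /andP[/bigcupP[R RB zR] /eqP e]].
by exists R, z.
Qed.

Lemma istar_idx N (B : {set {set 'I_N.+1}}) n : n \in istar B ->
  exists2 k, k < size (istar B) & ist B k = n.
Proof.
move=> ns; exists (index n (istar B)); first by rewrite index_mem.
by rewrite /ist nth_index.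
Qed.

Lemma ist_mem N (B : {set {set 'I_N.+1}}) k : k < size (istar B) -> ist B k \in istar B.
Proof. by move=> ks; rewrite /ist mem_nth. Qed.

Lemma supp_mem N (B : {set {set 'I_N.+1}}) X x : X \in B -> x \in X -> x \in supp B.
Proof. by move=> XB xX; apply/bigcupP; exists X. Qed.

Lemma other_elem N (X : {set 'I_N.+1}) u : is2 X -> u \in X ->
  exists2 b, b \in X & b != u.
Proof.
move=> /is2P[a [b [ab eX _ _]]]; rewrite eX !inE => /orP[]/eqP->.
  by exists b; rewrite ?inE ?eqxx ?orbT // eq_sym.
by exists a; rewrite ?inE ?eqxx.
Qed.

Lemma u_notin N (B : {set {set 'I_N.+1}}) (u : 'I_N.+1) lo hi :
  inP B -> B1cond B -> lo <= u <= hi -> 1 <= lo ->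
  covered0 B (itv N lo u.-1) -> covered0 B (itv N u.+1 hi) ->
  (forall R, R \in B0 B -> u \notin R) ->
  (forall P b, P \in B1 B -> u \in P -> b \in P -> lo <= b <= hi) ->
  u \notin supp B.
Proof.
move=> iB HB ur lo1 c1 c2 H0 H1; apply/negP => /bigcupP[X XB uX].
case oX : (odd_pair X); last first.
  by move: (H0 X); rewrite inE XB oX uX => /(_ isT).
have XB1 : X \in B1 B by rewrite inE XB oX.
have [b bX bu] := other_elem (inP_is2 iB XB) uX.
have := H1 X b XB1 uX bX => br.
case: (ltnP b u) => bu'.
  have bi : b \in itv N lo u.-1 by rewrite in_itv; clear -br bu'; lia.
  have [Q QB /andP[bQ sQ]] := cov0_elem iB HB c1 bi.
  have e := inP_disj iB XB (B1_sub QB) bX bQ.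
  have : u \in itv N lo u.-1.
    apply: (subsetP sQ); apply: (subsetP (sub_hull Q)); by rewrite -e.
  rewrite in_itv; clear -lo1 ur; lia.
have bi : b \in itv N u.+1 hi.
  rewrite in_itv; move: bu; rewrite -val_eqE /=; clear -br bu'; lia.
have [Q QB /andP[bQ sQ]] := cov0_elem iB HB c2 bi.
have e := inP_disj iB XB (B1_sub QB) bX bQ.
have : u \in itv N u.+1 hi.
  apply: (subsetP sQ); apply: (subsetP (sub_hull Q)); by rewrite -e.
rewrite in_itv; clear; lia.
Qed.


Lemma pairsetE N (u : 'I_N.+1) : pairset N u N = [set u; ord_max].
Proof.
apply/setP=> x; rewrite !inE; congr (_ || _); by rewrite -val_eqE.
Qed.

Lemma is2_pair N (u : 'I_N.+1) : 1 <= u < N -> is2 (pairset N u N).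
Proof.
move=> uN; rewrite /is2 pairsetE cards2; apply/andP; split.
  by rewrite -val_eqE /=; apply/eqP; lia.
apply/subsetP=> x; rewrite !inE => /orP[]/eqP->; rewrite /=; clear -uN; lia.
Qed.

Lemma hull_pair N (u : 'I_N.+1) : hull (pairset N u N) = itv N u N.
Proof.
rewrite pairsetE hull2 /=; have h : u <= N := leq_ord u.
by rewrite (minn_idPl h) (maxn_idPr h).
Qed.

Lemma odd_pair_pair N (u : 'I_N.+1) : odd_pair (pairset N u N) = odd (u + N).
Proof. by rewrite pairsetE odd_pair2. Qed.

Lemma inP_add N (B : {set {set 'I_N.+1}}) P : inP B -> is2 P ->
  (forall x, x \in P -> x \notin supp B) -> inP (B :|: [set P]).
Proof.
move=> iB P2 HP; apply/andP; split.
  apply/forallP=> X; apply/implyP; rewrite !inE => /orP[XB|/eqP->] //.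
  exact: inP_is2 iB XB.
apply/forallP=> X; apply/implyP=> XB'; apply/forallP=> Y; apply/implyP=> YB'.
apply/implyP=> XY; rewrite -setI_eq0; apply/eqP/setP=> x; rewrite !inE.
apply/negbTE/andP=> [[xX xY]]; move: XB' YB' XY; rewrite !inE.
move=> /orP[XB|/eqP eX] /orP[YB|/eqP eY].
- by rewrite (inP_disj iB XB YB xX xY) eqxx.
- by move: (HP x); rewrite -eY xY (supp_mem XB xX) => /(_ isT).
- by move: (HP x); rewrite -eX xX (supp_mem YB xY) => /(_ isT).
- by rewrite eX eY eqxx.
Qed.

Lemma B0_add_even N (B : {set {set 'I_N.+1}}) P : odd_pair P = false ->
  B0 (B :|: [set P]) = P |: B0 B.
Proof.
move=> oP; apply/setP=> X; rewrite !inE.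
by case: (eqVneq X P) => [->|_]; rewrite ?oP ?orbT ?orbF ?andbF.
Qed.

Lemma B1_add_even N (B : {set {set 'I_N.+1}}) P : odd_pair P = false ->
  B1 (B :|: [set P]) = B1 B.
Proof.
move=> oP; apply/setP=> X; rewrite !inE.
by case: (eqVneq X P) => [->|_]; rewrite ?oP ?orbT ?orbF ?andbF.
Qed.

Lemma B0_add_odd N (B : {set {set 'I_N.+1}}) P : odd_pair P = true ->
  B0 (B :|: [set P]) = B0 B.
Proof.
move=> oP; apply/setP=> X; rewrite !inE.
by case: (eqVneq X P) => [->|_]; rewrite ?oP ?orbT ?orbF ?andbF.
Qed.

Lemma B1_add_odd N (B : {set {set 'I_N.+1}}) P : odd_pair P = true ->
  B1 (B :|: [set P]) = P |: B1 B.
Proof.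
move=> oP; apply/setP=> X; rewrite !inE.
by case: (eqVneq X P) => [->|_]; rewrite ?oP ?orbT ?orbF ?andbF.
Qed.

Lemma supp_add N (B : {set {set 'I_N.+1}}) P : supp (P |: B) = P :|: supp B.
Proof.
apply/setP=> x; rewrite inE; apply/bigcupP/orP.
  move=> [X]; rewrite !inE => /orP[/eqP->|XB] xX; [by left|right; exact: supp_mem XB xX].
move=> [xP|/bigcupP[X XB xX]]; [exists P; rewrite ?inE ?eqxx|exists X; rewrite ?inE ?XB ?orbT] => //.
Qed.


Lemma starP_inP N (B : {set {set 'I_N.+1}}) : starP B -> inP B.
Proof. by case/and5P. Qed.
Lemma starP_B1 N (B : {set {set 'I_N.+1}}) : starP B -> B1cond B.
Proof. by case/and5P. Qed.
Lemma starP_size N (B : {set {set 'I_N.+1}}) : starP B -> size (istar B) = 2 * sB B.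
Proof. by case/and5P => _ _ /eqP. Qed.

Lemma elem_SN N (B : {set {set 'I_N.+1}}) X x : inP B -> X \in B -> x \in X -> 1 <= x.
Proof.
move=> iB XB xX; move: (inP_is2 iB XB) => /andP[_ /subsetP/(_ x xX)].
by rewrite in_itv => /andP[].
Qed.

Lemma notNin N (B : {set {set 'I_N.+1}}) x : ~~ Nin (supp B) -> x \in supp B -> val x != N.
Proof.
move=> H xs; apply/negP=> e; move: H; rewrite negb_exists => /forallP/(_ x).
by rewrite xs e.
Qed.

Lemma ist_bounds N (B : {set {set 'I_N.+1}}) n : starP B -> n \in istar B ->
  ifirst B <= n <= ilast B.
Proof.
move=> sP ns; have [k ks <-] := istar_idx ns.
rewrite /ifirst /ilast; move: (starP_size sP) => sz.
rewrite ist_le ?ist_le //; rewrite ?sz in ks *; clear -ks; lia.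
Qed.

Lemma ifirst_mem N (B : {set {set 'I_N.+1}}) : starP B -> 0 < sB B -> ifirst B \in istar B.
Proof. move=> sP s0; apply: ist_mem; rewrite (starP_size sP); clear -s0; lia. Qed.
Lemma ilast_mem N (B : {set {set 'I_N.+1}}) : starP B -> 0 < sB B -> ilast B \in istar B.
Proof. move=> sP s0; apply: ist_mem; rewrite (starP_size sP); clear -s0; lia. Qed.

Lemma istar_ge1 N (B : {set {set 'I_N.+1}}) n : starP B -> n \in istar B -> 1 <= n.
Proof.
move=> sP /istar_pt[R [z [RB zR <-]]].
exact: elem_SN (starP_inP sP) (B0_sub RB) zR.
Qed.

Lemma uB_spec N (B : {set {set 'I_N.+1}}) : XN2p B -> 0 < sB B ->
  exists u0 : 'I_N.+1, u_cond B u0 /\ uB B = u0.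
Proof.
move=> /andP[sP /andP[nN /orP[/eqP s0|/andP[_ cI]]]] s0'; first by rewrite s0 in s0'.
have [u0 Hu] : exists u0, u_cond B u0.
  rewrite /u_cond; case cIB : (caseI B).
    move: cIB => /andP[c1 c2].
    have [u [h1 h2 h3]] := cov1_split (leqnn 1) c1.
    by exists u; rewrite h1 h2 h3.
  move: cI; rewrite cIB /= => /andP[c1 c2].
  have [u [h1 h2 h3]] := cov1_split (ltn0Sn _) c2.
  by exists u; rewrite h1 h2 h3.
rewrite /uB; case: pickP => [x Hx|H]; first by exists x.
by move: (H u0); rewrite Hu.
Qed.

Lemma uB_facts N (B : {set {set 'I_N.+1}}) (u0 : 'I_N.+1) : odd N ->
  XN2p B -> 0 < sB B -> u_cond B u0 ->
  [/\ 1 <= u0 < N, u0 \notin supp B & odd u0 = caseI B].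
Proof.
move=> oN /andP[sP /andP[nN _]] s0.
have iB := starP_inP sP; have HB := starP_B1 sP.
rewrite /u_cond; case cIB : (caseI B).
  move=> /and3P[ur c1 c2].
  have [R [z [RB zR ez]]] := istar_pt (ifirst_mem sP s0); simpl in ez.
  have zN : (z : nat) <= N := leq_ord z.
  have ur' : 1 <= u0 < N by clear -ur ez zN; lia.
  split=> //.
    apply: (u_notin iB HB ur (leqnn 1) c1 c2).
      move=> R' R'B; apply/negP => uR'.
      have : (u0 : nat) \in istar B by rewrite mem_istar; apply/existsP; exists u0;
        rewrite eqxx andbT; apply/bigcupP; exists R'.
      move=> /(ist_bounds sP); clear -ur; lia.
    move=> P b PB uP bP.
    have b1 : 1 <= b := elem_SN iB (B1_sub PB) bP.
    rewrite b1 /=; case: (leqP b (ifirst B).-1) => // hb.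
    have := Lz iB HB RB zR PB; rewrite in_hull => /negP; case.
    apply/existsP; exists u0; rewrite uP /=; apply/existsP; exists b; rewrite bP /=.
    clear -ur hb ez; lia.
  have := cov0_even iB c1; rewrite card_itv; last by clear -ur'; lia.
  have -> : (u0.-1).+1 - 1 = u0.-1 by clear -ur'; lia.
  have e : (u0 : nat) = (u0.-1).+1 by clear -ur'; lia.
  by rewrite e oddS; case: (odd _).
move=> /and3P[ur c1 c2].
have N1 : 0 < N by move: oN; rewrite lt0n; apply: contraTneq => ->.
have ur' : 1 <= u0 < N by clear -ur N1; lia.
split=> //.
  have lo1 : 1 <= (ilast B).+1 by [].
  apply: (u_notin iB HB ur lo1 c1 c2).
    move=> R' R'B; apply/negP => uR'.
    have : (u0 : nat) \in istar B by rewrite mem_istar; apply/existsP; exists u0;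
      rewrite eqxx andbT; apply/bigcupP; exists R'.
    move=> /(ist_bounds sP); clear -ur; lia.
  move=> P b PB uP bP.
  have bN : (b : nat) != N := notNin nN (supp_mem (B1_sub PB) bP).
  have bN' : b <= N := leq_ord b.
  have [R [z [RB zR ez]]] := istar_pt (ilast_mem sP s0); simpl in ez.
  case: (leqP b (ilast B)) => hb; last by move: bN; clear -hb bN'; lia.
  have := Lz iB HB RB zR PB; rewrite in_hull => /negP; case.
  apply/existsP; exists b; rewrite bP /=; apply/existsP; exists u0; rewrite uP /=.
  clear -ur hb ez; lia.
have := cov0_even iB c2; rewrite card_itv; last by clear; lia.
have -> : (N.-1).+1 - u0.+1 = N.-1 - u0 by clear -ur' N1; lia.
rewrite oddB; last by clear -ur'; lia.
have oN1 : odd (N.-1).+1 by rewrite prednK.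
have -> : odd N.-1 = false by move: oN1; rewrite oddS => /negbTE.
by case: (odd _).
Qed.


Lemma cov0_cup N (B : {set {set 'I_N.+1}}) X Y : covered0 B X -> covered0 B Y ->
  [disjoint X & Y] -> covered0 B (X :|: Y).
Proof.
move=> /existsP[C1 /and3P[s1 h1 /eqP e1]] /existsP[C2 /and3P[s2 h2 /eqP e2]] dXY.
apply/existsP; exists (C1 :|: C2); rewrite subUset s1 s2 /= bigcup_setU -e1 -e2 eqxx andbT.
apply/forallP=> Y1; apply/implyP=> Y1C; apply/forallP=> Y2; apply/implyP=> Y2C.
apply/implyP=> Y12.
have sub1 : forall Z, Z \in C1 -> hull Z \subset X by move=> Z ZC; rewrite e1; apply: bigcup_sup.
have sub2 : forall Z, Z \in C2 -> hull Z \subset Y by move=> Z ZC; rewrite e2; apply: bigcup_sup.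
move: Y1C Y2C; rewrite !inE => /orP[a1|a2] /orP[b1|b2].
- by move/forallP: h1 => /(_ Y1); rewrite a1 => /forallP/(_ Y2); rewrite b1 Y12.
- exact: disjointWl (sub1 _ a1) (disjointWr (sub2 _ b2) dXY).
- rewrite disjoint_sym; exact: disjointWl (sub1 _ b1) (disjointWr (sub2 _ a2) dXY).
- by move/forallP: h2 => /(_ Y1); rewrite a2 => /forallP/(_ Y2); rewrite b2 Y12.
Qed.

Lemma cov0_hull N (B : {set {set 'I_N.+1}}) P : P \in B1 B -> covered0 B (hull P).
Proof.
move=> PB; apply/existsP; exists [set P]; rewrite sub1set PB big_set1 eqxx andbT /=.
apply/forallP=> Y; apply/implyP; rewrite inE => /eqP->; apply/forallP=> Z; apply/implyP.
by rewrite inE => /eqP->; rewrite eqxx.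
Qed.

Lemma XN2p_m N (B : {set {set 'I_N.+1}}) : XN2p B -> XN2m B = false.
Proof.
move=> /andP[_ /andP[nN _]]; apply/negbTE/negP => /andP[_ /andP[_ /existsP[X /andP[XB /andP[/existsP[x /andP[xX e]] _]]]]].
by move: (notNin nN (supp_mem XB xX)); rewrite e.
Qed.

Lemma ordmax_notin N (B : {set {set 'I_N.+1}}) : ~~ Nin (supp B) -> (ord_max : 'I_N.+1) \notin supp B.
Proof. by move=> nN; apply/negP => /(notNin nN); rewrite /= eqxx. Qed.

Lemma P_notin N (B : {set {set 'I_N.+1}}) u : ~~ Nin (supp B) -> pairset N u N \notin B.
Proof.
move=> nN; apply/negP => PB; move: (ordmax_notin nN); rewrite (supp_mem PB) //.
by rewrite inE /= eqxx orbT.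
Qed.

Lemma eps_phi N (B : {set {set 'I_N.+1}}) : odd N -> XN2 B -> eps (phi B) = eps' B.
Proof.
move=> oN XB; rewrite /phi /eps'.
case H : (XN2p B && (0 < sB B)); last first.
  suff -> : XN2m B || (sB B == 0) by [].
  move: XB H; rewrite /XN2; case: (XN2m B) => //=; rewrite orbF => -> /=.
  by case: (sB B).
move: H => /andP[pB s0]; rewrite (XN2p_m pB) /=.
have -> : (sB B == 0) = false by case: (sB B) s0.
have nN : ~~ Nin (supp B) by move: pB => /andP[_ /andP[]].
have [u0 [uc ->]] := uB_spec pB s0.
have [ur un ou] := uB_facts oN pB s0 uc.
rewrite eps_add ?P_notin //.
case oU : (odd u0); congr (symd _ _).
  have oP : odd_pair (pairset N u0 N) = false by rewrite odd_pair_pair oddD oU oN.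
  rewrite /brk oP hull_pair; apply/setP=> x; rewrite in_symd !inE /=.
  have xN := leq_ord x.
  case: (eqVneq (x : nat) N) => e; rewrite ?e ?eqxx /=; apply/idP/idP; clear -ur xN e; lia.
have oP : odd_pair (pairset N u0 N) = true by rewrite odd_pair_pair oddD oU oN.
by rewrite /brk oP hull_pair.
Qed.


Lemma itv_split N a b u : 1 <= u -> a <= u -> u <= b.+1 -> itv N a b = itv N a u.-1 :|: itv N u b.
Proof. move=> u1 au ub; apply/setP=> x; rewrite !inE; apply/idP/idP; clear -u1 au ub; lia. Qed.

Lemma itv_disj N a b u : 1 <= u -> [disjoint itv N a u.-1 & itv N u b].
Proof.
move=> u1; rewrite -setI_eq0; apply/eqP/setP=> x; rewrite !inE.
by apply/negbTE/negP; clear -u1; lia.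
Qed.

Lemma cov0_mono_sub N (B B2 : {set {set 'I_N.+1}}) X :
  B \subset B2 -> covered0 B X -> covered0 B2 X.
Proof. by move=> s; apply: cov0_mono; apply: B1_mono. Qed.

Lemma P_fresh N (B : {set {set 'I_N.+1}}) (u0 : 'I_N.+1) : u0 \notin supp B ->
  ~~ Nin (supp B) -> forall x, x \in pairset N u0 N -> x \notin supp B.
Proof.
move=> un nN x; rewrite pairsetE !inE => /orP[]/eqP-> //.
exact: ordmax_notin.
Qed.

Lemma XN1_caseII N (B : {set {set 'I_N.+1}}) (u0 : 'I_N.+1) : odd N -> XN2p B ->
  0 < sB B -> u_cond B u0 -> caseI B = false ->
  XN1 (B :|: [set pairset N u0 N]).
Proof.
move=> oN pB s0 uc cIB.
have [ur un ou] := uB_facts oN pB s0 uc; rewrite cIB in ou.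
move: (pB) => /andP[sP /andP[nN /orP[/eqP s00|/andP[_ cI]]]]; first by rewrite s00 in s0.
move: cI; rewrite cIB /= => /andP[cII1 _].
move: uc; rewrite /u_cond cIB => /and3P[ur2 c1 c2].
set P := pairset N u0 N.
have oP : odd_pair P = true by rewrite odd_pair_pair oddD ou oN.
have sub : B \subset B :|: [set P] := subsetUl _ _.
have PB1 : P \in B1 (B :|: [set P]) by rewrite inE oP andbT !inE eqxx orbT.
have e0 := B0_add_odd B oP.
have ei : istar (B :|: [set P]) = istar B by rewrite /istar e0.
have es : sB (B :|: [set P]) = sB B by rewrite /sB e0.
have eist : ist (B :|: [set P]) = ist B by rewrite /ist ei.
rewrite /XN1 /starP /condI /ifirst /ilast e0 ei es eist.
move: sP => /and5P[iB HB h3 h4 h5].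
apply/andP; split; last first.
  have -> : (sB B == 0) = false by case: (sB B) s0.
  rewrite /= (cov0_mono_sub sub cII1) /=.
  rewrite (@itv_split N _ N u0); [|clear -ur; lia|move: ur2; rewrite /ilast; clear; lia|clear -ur; lia].
  apply: cov0_cup; first exact: cov0_mono_sub sub c1.
    by rewrite -hull_pair; apply: cov0_hull.
  by apply: itv_disj; clear -ur; lia.
apply/and5P; split => //.
- exact: inP_add iB (is2_pair ur) (P_fresh un nN).
- apply/forallP=> X; apply/implyP; rewrite (B1_add_odd B oP) in_setU1 => /orP[/eqP->|XB].
    have -> : hull P :\: P = itv N u0.+1 N.-1.
      apply/setP=> x; rewrite /P hull_pair !inE /=; have := leq_ord x.
      clear; case: (eqVneq (x : nat) N) => e; rewrite ?e ?eqxx /= => h; apply/idP/idP; lia.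
    exact: cov0_mono_sub sub c2.
  move/forallP: HB => /(_ X); rewrite XB /= => c; exact: cov0_mono_sub sub c.
- apply/forallP=> k; move/forallP: h5 => /(_ k) /implyP h; apply/implyP => hk.
  exact: cov0_mono_sub sub (h hk).
Qed.


Lemma XN1_caseI N (B : {set {set 'I_N.+1}}) (u0 : 'I_N.+1) : odd N -> XN2p B ->
  0 < sB B -> u_cond B u0 -> caseI B = true ->
  XN1 (B :|: [set pairset N u0 N]).
Proof.
move=> oN pB s0 uc cIB.
have [ur un ou] := uB_facts oN pB s0 uc; rewrite cIB in ou.
move: (pB) => /andP[sP /andP[nN _]].
move: (cIB) => /andP[_ cI2].
move: uc; rewrite /u_cond cIB => /and3P[ur2 c1 c2].
set P := pairset N u0 N.
have oP : odd_pair P = false by rewrite odd_pair_pair oddD ou oN.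
have sub : B \subset B :|: [set P] := subsetUl _ _.
have e0 := B0_add_even B oP.
have e1 := B1_add_even B oP.
move: (sP) => /and5P[iB HB /eqP h3 h4 h5].
have PnB0 : P \notin B0 B by apply/negP => /B0_sub; apply/negP; exact: P_notin.
have es : sB (B :|: [set P]) = (sB B).+1 by rewrite /sB e0 cardsU1 PnB0.
have bnd : forall n, n \in istar B -> u0 < n < N.
  move=> n ns; have := ist_bounds sP ns; rewrite /ifirst => hb.
  have [R [z [RB zR ez]]] := istar_pt ns; simpl in ez.
  have zN : (z : nat) != N := notNin nN (supp_mem (B0_sub RB) zR).
  have := leq_ord z; move: zN hb ur2; rewrite ez /ifirst; clear; lia.
have ei : istar (B :|: [set P]) = (u0 : nat) :: rcons (istar B) N.
  apply: (irr_sorted_eq ltn_trans ltnn); first exact: sorted_istar.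
    rewrite /= rcons_path (path_sortedE ltn_trans) sorted_istar andbT.
    apply/andP; split; first by apply/allP => n /bnd /andP[].
    have := mem_last (u0 : nat) (istar B); rewrite in_cons => /orP[/eqP->|/bnd /andP[] //].
    by case/andP: ur.
  move=> n; rewrite mem_istar /= in_cons mem_rcons in_cons e0 supp_add.
  apply/existsP/idP.
    move=> [x /andP[]]; rewrite in_setU => /orP[xP|xs] /eqP <-.
      by move: xP; rewrite /P !inE => /orP[->|->]; rewrite ?orbT.
    by rewrite mem_istar; apply/orP; right; apply/orP; right; apply/existsP; exists x; rewrite xs eqxx.
  move=> /orP[/eqP->|/orP[/eqP->|]].
  - by exists u0; rewrite in_setU /P !inE eqxx.
  - by exists ord_max; rewrite in_setU /P !inE eqxx orbT.
  rewrite mem_istar => /existsP[x /andP[xs e]]; exists x; by rewrite in_setU xs orbT e.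
have eist0 : ist (B :|: [set P]) 0 = u0 by rewrite /ist ei.
have eistS : forall k, k < 2 * sB B -> ist (B :|: [set P]) k.+1 = ist B k.
  by move=> k kl; rewrite /ist ei /= nth_rcons h3 kl.
have eistL : ist (B :|: [set P]) (2 * sB B).+1 = N.
  by rewrite /ist ei /= nth_rcons h3 ltnn eqxx.
rewrite /XN1 /starP /condI /ifirst /ilast e0 e1 es.
apply/andP; split; last first.
  rewrite eist0 (_ : (2 * (sB B).+1).-1 = (2 * sB B).+1) ?eistL; last by clear; lia.
  rewrite /= (cov0_mono_sub sub c1) /=; exact: cov0_empty.
apply/and5P; split.
- exact: inP_add iB (is2_pair ur) (P_fresh un nN).
- apply/forallP=> X; apply/implyP=> XB.
  move/forallP: HB => /(_ X); rewrite XB /= => c; exact: cov0_mono_sub sub c.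
- by rewrite ei /= size_rcons h3; apply/eqP; clear; lia.
- rewrite {1}(eqP h4); apply/eqP/setP=> X; rewrite in_setU1 !inE.
  apply/idP/idP.
    move=> /orP[/eqP->|/existsP[k /eqP->]].
      apply/existsP; exists ord0; rewrite /= eist0.
      rewrite (_ : 2 * (sB B).+1 - 1 - 0 = (2 * sB B).+1) ?eistL; last by clear; lia.
      by rewrite /P /pairset.
    have hk : k.+1 < (sB B).+1 by rewrite ltnS ltn_ord.
    apply/existsP; exists (Ordinal hk); rewrite /=.
    have kl := ltn_ord k.
    rewrite eistS; last by clear -kl; lia.
    rewrite (_ : 2 * (sB B).+1 - 1 - k.+1 = (2 * sB B - 1 - k).+1); last by clear -kl; lia.
    by rewrite eistS //; clear -kl; lia.
  move=> /existsP[[[|k] hk] /eqP->] /=.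
    rewrite eist0 (_ : 2 * (sB B).+1 - 1 - 0 = (2 * sB B).+1) ?eistL; last by clear; lia.
    by rewrite /P /pairset eqxx.
  have kl : k < sB B by clear -hk; lia.
  apply/orP; right; apply/existsP; exists (Ordinal kl); rewrite /=.
  rewrite eistS; last by clear -kl; lia.
  rewrite (_ : 2 * (sB B).+1 - 1 - k.+1 = (2 * sB B - 1 - k).+1); last by clear -kl; lia.
  by rewrite eistS //; clear -kl; lia.
- apply/forallP=> -[[|k] hk] /=; apply/implyP => /andP[k1 k2].
    rewrite eist0 eistS; last by clear -s0; lia.
    exact: cov0_mono_sub sub c2.
  case: (ltnP k.+1 (2 * sB B)) => kl.
    rewrite eistS; last by clear -kl; lia.
    rewrite eistS //.
    have kl' : k < 2 * sB B by clear -kl; lia.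
    move/forallP: h5 => /(_ (Ordinal kl')) /= /implyP h.
    apply: cov0_mono_sub sub (h _); apply/andP; split => //.
  have ek : k.+1 = 2 * sB B by move: k1; clear -kl; lia.
  have ea : ist (B :|: [set P]) k.+1 = ilast B.
    rewrite eistS; last by clear -ek; lia.
    by rewrite /ilast -ek.
  have eb : ist (B :|: [set P]) k.+2 = N by rewrite ek eistL.
  rewrite ea eb; exact: cov0_mono_sub sub cI2.
Qed.


Lemma phi_XN1 N (B : {set {set 'I_N.+1}}) : odd N -> XN2 B -> XN1 (phi B).
Proof.
move=> oN XB; rewrite /phi; case H : (XN2p B && (0 < sB B)).
  move/andP: H => [pB s0]; have [u0 [uc ->]] := uB_spec pB s0.
  case cIB : (caseI B); [exact: XN1_caseI | exact: XN1_caseII].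
move: XB; rewrite /XN2 => /orP[pB|/andP[sP /andP[cI _]]]; last by rewrite /XN1 sP cI.
move: (pB) => /andP[sP _]; rewrite /XN1 sP /condI.
by move: H; rewrite pB /=; case: (sB B).
Qed.

Lemma inspan_mono N (X : {set 'I_N.+1}) (B B2 : {set {set 'I_N.+1}}) : inspan X B -> B \subset B2 -> inspan X B2.
Proof.
move=> /existsP[D /andP[sD e]] s; apply/existsP; exists D; by rewrite (subset_trans sD s) e.
Qed.

Lemma phi_sub N (B : {set {set 'I_N.+1}}) : B \subset phi B.
Proof. rewrite /phi; case: ifP => _ //; exact: subsetUl. Qed.

Lemma path_phi N (x : {set {set 'I_N.+1}}) (p : seq {set {set 'I_N.+1}}) : odd N -> all (@XN2 N) (x :: p) ->
  path (fun X Y => inspan (eps' X) Y) x p ->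
  path (fun X Y => inspan (eps X) Y) (phi x) (map (@phi N) p).
Proof.
move=> oN; elim: p x => //= y p IH x /and3P[hx hy hp] /andP[h1 h2].
apply/andP; split.
  by rewrite eps_phi //; apply: inspan_mono h1 (phi_sub y).
by apply: IH => //; rewrite /= hy hp.
Qed.

Theorem mainTheorem3 (N : nat) (HNodd : odd N) (HN3 : 3 <= N)
    (B' B : {set {set 'I_N.+1}}) :
  XN2 B' -> XN2 B -> preceq B' B -> leX (phi B') (phi B).
Proof.
move=> XB' XB [p /and3P[allp pth /eqP lst]].
exists (map (@phi N) p); apply/and3P; split.
- rewrite -map_cons all_map; apply/allP => X Xin /=.
  exact: phi_XN1 HNodd (allP allp X Xin).
- exact: path_phi.
- by rewrite last_map lst.
Qed.
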